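(* For every $\varphi\in\mathcal{L}_{CoRGAL}$, if $\varphi$ is valid then $\varphi\in\mathbf{CoRGAL}$.
   Context: Fix a finite set $A$ of agents and a countable set $P$ of propositional variables. The language $\mathcal{L}_{CoRGAL}$ is given by $\varphi ::= p \mid \neg\varphi \mid (\varphi\wedge\varphi) \mid K_a\varphi \mid [\varphi]\varphi \mid [G,\varphi]\varphi \mid [\langle G\rangle]\varphi$ with $p\in P$, $a\in A$, $G\subseteq A$. $\mathcal{L}_{EL}$ is the fragment built only from $p,\neg,\wedge,K_a$. Duals: $\langle\psi\rangle\varphi:=\neg[\psi]\neg\varphi$, $\langle G,\psi\rangle\varphi:=\neg[G,\psi]\neg\varphi$. $\mathcal{L}^G_{EL}$ is the set of formulas $\bigwedge_{i\in G}K_i\varphi_i$ with $\varphi_i\in\mathcal{L}_{EL}$; $\psi_G,\chi_G$ range over it. Semantics over epistemic models $M=(W,\sim,V)$ ($W\ne\emptyset$, $\sim_a$ equivalence relations, $V:P\to\mathcal{P}(W)$; $M^\varphi$ the restriction to $\{v:(M,v)\models\varphi\}$): standard for $p,\neg,\wedge,K_a$; $[\varphi]\psi$ holds at $w$ iff $(M,w)\models\varphi$ implies $(M^\varphi,w)\models\psi$; $[G,\chi]\varphi$ holds iff $\chi$ holds and $[\psi_G\wedge\chi]\varphi$ holds for all $\psi_G$; $[\langle G\rangle]\varphi$ holds iff for every $\psi_G$ there is $\chi_{A\setminus G}$ with $\psi_G\to\langle\psi_G\wedge\chi_{A\setminus G}\rangle\varphi$ holding. Valid means true at every pointed model. Necessity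 forms: $\eta ::= \sharp \mid \varphi\to\eta(\sharp)\mid K_a\eta(\sharp)\mid[\varphi]\eta(\sharp)$, $\eta(\varphi)$ replaces the unique $\sharp$ by $\varphi$. $\mathbf{CoRGAL}$ is the smallest set containing all instances of (A0) propositional tautologies; (A1) $K_a(\varphi\to\psi)\to(K_a\varphi\to K_a\psi)$; (A2) $K_a\varphi\to\varphi$; (A3) $K_a\varphi\to K_aK_a\varphi$; (A4) $\neg K_a\varphi\to K_a\neg K_a\varphi$; (A5) $[\varphi]p\leftrightarrow(\varphi\to p)$; (A6) $[\varphi]\neg\psi\leftrightarrow(\varphi\to\neg[\varphi]\psi)$; (A7) $[\varphi](\psi\wedge\chi)\leftrightarrow([\varphi]\psi\wedge[\varphi]\chi)$; (A8) $[\varphi]K_a\psi\leftrightarrow(\varphi\to K_a[\varphi]\psi)$; (A9) $[\varphi][\psi]\chi\leftrightarrow[\varphi\wedge[\varphi]\psi]\chi$; (A10) $[G,\chi]\varphi\to\chi\wedge[\psi_G\wedge\chi]\varphi$; (A11) $[\langle G\rangle]\varphi\to\langle A\setminus G,\psi_G\rangle\varphi$; closed under (R0) modus ponens; (R1) $\varphi/K_a\varphi$; (R2) $\varphi/[\psi]\varphi$; (R3) $\varphi/[G,\chi]\varphi$; (R4) $\varphi/[\langle G\rangle]\varphi$; (R5) from $\eta(\chi\wedge[\psi_G\wedge\chi]\varphi)$ for all $\psi_G$ infer $\eta([G,\chi]\varphi)$; (R6) from $\eta(\langle A\setminus G,\psi_G\rangle\varphi)$ for all $\psi_G$ infer $\eta([\langle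 G\rangle]\varphi)$. *)

(* Defs.v *)
From mathcomp Require Import all_boot.
Set Implicit Arguments.
Unset Strict Implicit.
Unset Printing Implicit Defensive.

Section CoRGAL.
Variables (A : finType) (P : countType).

Inductive form : Type :=
| Var of P
| Neg of form
| And of form & form
| K of A & form
| Ann of form & form
| GAnn of {set A} & form & form
| CoAnn of {set A} & form.

Definition Imp (f g : form) : form := Neg (And f (Neg g)).
Definition Iff (f g : form) : form := And (Imp f g) (Imp g f).
Definition Dia (f g : form) : form := Neg (Ann f (Neg g)).
Definition DiaG (G : {set A}) (chi f : form) : form :=
  Neg (GAnn G chi (Neg f)).
Definition Top (p : P) : form := Neg (And (Var p) (Neg (Var p))).

Fixpoint isEL (f : form) : Prop :=
  match f with
  | Var _ => True
  | Neg g => isEL g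
  | And g h => isEL g /\ isEL h
  | K _ g => isEL g
  | _ => False
  end.

Fixpoint conjOf (l : seq form) (f : form) : Prop :=
  match l with
  | [::] => exists p, f = Top p
  | x :: l' =>
      match l' with
      | [::] => f = x
      | _ => exists f', f = And x f' /\ conjOf l' f'
      end
  end.

(* L^G_EL : formulas  /\_{i in G} K_i phi_i  with phi_i in L_EL *)
Definition isELG (G : {set A}) (psi : form) : Prop :=
  exists phis : A -> form, (forall i, isEL (phis i)) /\
    conjOf [seq K i (phis i) | i <- enum G] psi.

Fixpoint qc (f : form) : nat :=
  match f with
  | Var _ => 0
  | Neg g => qc g
  | And g h => qc g + qc h
  | K _ g => qc g
  | Ann g h => qc g + qc h
  | GAnn _ chi g => (qc chi + qc g).+1
  | CoAnn _ g => (qc g).+1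
  end.

Record model : Type := Model {
  world : Type;
  world_inhabited : world;
  rel : A -> world -> world -> Prop;
  rel_refl : forall a w, rel a w w;
  rel_sym : forall a w v, rel a w v -> rel a v w;
  rel_trans : forall a u v w, rel a u v -> rel a v w -> rel a u w;
  val : P -> world -> Prop
}.

(* Satisfaction in the submodel of M with domain D (restriction M^phi is
   represented by shrinking D).  The natural number n is fuel bounding the
   number of nested quantifiers; with n = qc f it is never exhausted. *)
Fixpoint satn (M : model) (n : nat) : (world M -> Prop) -> world M -> form -> Prop :=
  fix go (D : world M -> Prop) (w : world M) (f : form) {struct f} : Prop :=
  match f with
  | Var p => @val M p w
  | Neg g => ~ go D w g
  | And g h => go D w g /\ go D w h
  | K a g => forall v, D v -> @rel M a w v -> go D v g
  | Ann g h => go D w g -> go (fun v => D v /\ go D v g) w h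
  | GAnn G chi g =>
      match n with
      | 0 => False
      | m.+1 => go D w chi /\
                forall psi, isELG G psi -> satn m D w (Ann (And psi chi) g)
      end
  | CoAnn G g =>
      match n with
      | 0 => False
      | m.+1 => forall psi, isELG G psi ->
                  exists chi, isELG (~: G) chi /\
                    satn m D w (Imp psi (Dia (And psi chi) g))
      end
  end.

Arguments satn : clear implicits.
Arguments satn M n D w f : rename.

Definition sat (M : model) (w : world M) (f : form) : Prop :=
  satn M (qc f) (fun _ => True) w f.

Definition valid (f : form) : Prop := forall (M : model) (w : world M), @sat M w f.

(* Propositional tautologies (instances): true under every boolean valuation of
   the maximal non-propositional subformulas. *)
Fixpoint peval (v : form -> bool) (f : form) : bool :=
  match f with
  | Neg g => ~~ peval v g
  | And g h => peval v g && peval v h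
  | _ => v f
  end.

Definition taut (f : form) : Prop := forall v, peval v f.

Inductive nform : Type :=
| NHole
| NImp of form & nform
| NK of A & nform
| NAnn of form & nform.

Fixpoint fill (e : nform) (x : form) : form :=
  match e with
  | NHole => x
  | NImp f e' => Imp f (fill e' x)
  | NK a e' => K a (fill e' x)
  | NAnn f e' => Ann f (fill e' x)
  end.

Inductive CoRGAL : form -> Prop :=
| Ax0 f : taut f -> CoRGAL f
| Ax1 a f g : CoRGAL (Imp (K a (Imp f g)) (Imp (K a f) (K a g)))
| Ax2 a f : CoRGAL (Imp (K a f) f)
| Ax3 a f : CoRGAL (Imp (K a f) (K a (K a f)))
| Ax4 a f : CoRGAL (Imp (Neg (K a f)) (K a (Neg (K a f))))
| Ax5 f p : CoRGAL (Iff (Ann f (Var p)) (Imp f (Var p)))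
| Ax6 f g : CoRGAL (Iff (Ann f (Neg g)) (Imp f (Neg (Ann f g))))
| Ax7 f g h : CoRGAL (Iff (Ann f (And g h)) (And (Ann f g) (Ann f h)))
| Ax8 f a g : CoRGAL (Iff (Ann f (K a g)) (Imp f (K a (Ann f g))))
| Ax9 f g h : CoRGAL (Iff (Ann f (Ann g h)) (Ann (And f (Ann f g)) h))
| Ax10 G chi f psi : isELG G psi ->
    CoRGAL (Imp (GAnn G chi f) (And chi (Ann (And psi chi) f)))
| Ax11 G f psi : isELG G psi ->
    CoRGAL (Imp (CoAnn G f) (DiaG (~: G) psi f))
| Ru0 f g : CoRGAL (Imp f g) -> CoRGAL f -> CoRGAL g
| Ru1 a f : CoRGAL f -> CoRGAL (K a f)
| Ru2 f g : CoRGAL f -> CoRGAL (Ann g f)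
| Ru3 G chi f : CoRGAL f -> CoRGAL (GAnn G chi f)
| Ru4 G f : CoRGAL f -> CoRGAL (CoAnn G f)
| Ru5 e G chi f :
    (forall psi, isELG G psi -> CoRGAL (fill e (And chi (Ann (And psi chi) f)))) ->
    CoRGAL (fill e (GAnn G chi f))
| Ru6 e G f :
    (forall psi, isELG G psi -> CoRGAL (fill e (DiaG (~: G) psi f))) ->
    CoRGAL (fill e (CoAnn G f)).

End CoRGAL.

(* Main.v *)
Require Import Defs.
From mathcomp Require Import all_boot zify.
From Stdlib Require Import Classical ClassicalEpsilon FunctionalExtensionality PropExtensionality.
Set Implicit Arguments. Unset Strict Implicit. Unset Printing Implicit Defensive.

Arguments Var {A P} _.
Arguments Top {A P} p.
Arguments NHole {A P}.

Section Proof.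
Variables (A : finType) (P : countType).
Local Notation form := (form A P).
Local Notation model := (model A P).

Lemma isEL_qc (f : form) : isEL f -> qc f = 0.
Proof. elim: f => //= g IHg h IHh [/IHg -> /IHh ->] //. Qed.

Lemma conjOf_qc (l : seq form) f : (forall x, List.In x l -> qc x = 0) -> conjOf l f -> qc f = 0.
Proof.
elim: l f => [|x l IH] f Hl /=.
  by move=> [p ->].
case: l IH Hl => [|y l] IH Hl.
  by move=> ->; apply: Hl; left.
move=> [f' [-> Hc]] /=.
rewrite (Hl x) /=; last by left.
rewrite (IH f') //.
by move=> z Hz; apply: Hl; right.
Qed.

Lemma isELG_qc G (f : form) : isELG G f -> qc f = 0.
Proof.
move=> [phis [Hp Hc]]; apply: conjOf_qc Hc => x /List.in_map_iff [i [<- _]] /=.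
exact: isEL_qc.
Qed.

Section Sem.
Variable M : model.
Local Notation W := (world M).
Local Notation sn := (@satn A P M).

Lemma sn_Var n D w p : sn n D w (Var p) = Defs.val p w.
Proof. by case: n. Qed.
Lemma sn_Neg n D w g : sn n D w (Neg g) = ~ sn n D w g.
Proof. by case: n. Qed.
Lemma sn_And n D w g h : sn n D w (And g h) = (sn n D w g /\ sn n D w h).
Proof. by case: n. Qed.
Lemma sn_K n D w a g : sn n D w (K a g) = (forall v, D v -> Defs.rel a w v -> sn n D v g).
Proof. by case: n. Qed.
Lemma sn_Ann n D w g h : sn n D w (Ann g h) = (sn n D w g -> sn n (fun v => D v /\ sn n D v g) w h).
Proof. by case: n. Qed.
Lemma sn_GAnn n D w G c g : sn n.+1 D w (GAnn G c g) =
  (sn n.+1 D w c /\ forall psi, isELG G psi -> sn n D w (Ann (And psi c) g)).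
Proof. by []. Qed.
Lemma sn_CoAnn n D w G g : sn n.+1 D w (CoAnn G g) =
  (forall psi, isELG G psi -> exists chi, isELG (~: G) chi /\ sn n D w (Imp psi (Dia (And psi chi) g))).
Proof. by []. Qed.

Lemma satn_fuel N : forall (f : form), qc f <= N -> forall n1 n2, qc f <= n1 -> qc f <= n2 ->
  forall D w, sn n1 D w f <-> sn n2 D w f.
Proof.
elim: N => [|N IHN] f.
- elim: f => //=.
  + by move=> p *; rewrite !sn_Var.
  + move=> g IH Hq n1 n2 H1 H2 D w. by rewrite !sn_Neg (IH Hq n1 n2 H1 H2).
  + move=> g IHg h IHh Hq n1 n2 H1 H2 D w.
    have Hg : qc g <= 0 by lia. have Hh : qc h <= 0 by lia.
    rewrite !sn_And (IHg Hg n1 n2) ?(IHh Hh n1 n2) //; lia.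
  + move=> a g IH Hq n1 n2 H1 H2 D w.
    rewrite !sn_K; by split => H v Dv R; apply/(IH Hq n1 n2 H1 H2); apply: H.
  + move=> g IHg h IHh Hq n1 n2 H1 H2 D w.
    have Hg : qc g <= 0 by lia. have Hh : qc h <= 0 by lia.
    have E : (fun v => D v /\ sn n1 D v g) = (fun v => D v /\ sn n2 D v g).
      apply: functional_extensionality => v; apply: propositional_extensionality.
      rewrite (IHg Hg n1 n2) //; lia.
    rewrite !sn_Ann E (IHg Hg n1 n2) ?(IHh Hh n1 n2) //; lia.
- elim: f => //=.
  + by move=> p *; rewrite !sn_Var.
  + move=> g IH Hq n1 n2 H1 H2 D w. by rewrite !sn_Neg (IH Hq n1 n2 H1 H2).
  + move=> g IHg h IHh Hq n1 n2 H1 H2 D w.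
    have Hg : qc g <= N.+1 by lia. have Hh : qc h <= N.+1 by lia.
    rewrite !sn_And (IHg Hg n1 n2) ?(IHh Hh n1 n2) //; lia.
  + move=> a g IH Hq n1 n2 H1 H2 D w.
    rewrite !sn_K; by split => H v Dv R; apply/(IH Hq n1 n2 H1 H2); apply: H.
  + move=> g IHg h IHh Hq n1 n2 H1 H2 D w.
    have Hg : qc g <= N.+1 by lia. have Hh : qc h <= N.+1 by lia.
    have E : (fun v => D v /\ sn n1 D v g) = (fun v => D v /\ sn n2 D v g).
      apply: functional_extensionality => v; apply: propositional_extensionality.
      rewrite (IHg Hg n1 n2) //; lia.
    rewrite !sn_Ann E (IHg Hg n1 n2) ?(IHh Hh n1 n2) //; lia.
  + move=> G c IHc g IHg Hq [|n1] [|n2] H1 H2 D w //.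
    have Hc : qc c <= N.+1 by lia.
    rewrite !sn_GAnn (IHc Hc n1.+1 n2.+1); try lia.
    split => -[Hc' H]; split => // psi Hpsi.
    * have Hp := isELG_qc Hpsi.
      apply/(IHN (Ann (And psi c) g) _ n1 n2) => /=; try lia. exact: H.
    * have Hp := isELG_qc Hpsi.
      apply/(IHN (Ann (And psi c) g) _ n1 n2) => /=; try lia. exact: H.
  + move=> G g IHg Hq [|n1] [|n2] H1 H2 D w //.
    rewrite !sn_CoAnn; split => H psi Hpsi; have [chi [Hchi Hs]] := H psi Hpsi; exists chi; split => //.
    * have Hp := isELG_qc Hpsi. have Hc := isELG_qc Hchi.
      apply/(IHN (Imp psi (Dia (And psi chi) g)) _ n1 n2) => /=; try lia. exact: Hs.
    * have Hp := isELG_qc Hpsi. have Hc := isELG_qc Hchi.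
      apply/(IHN (Imp psi (Dia (And psi chi) g)) _ n1 n2) => /=; try lia. exact: Hs.
Qed.

Definition tr D w (f : form) := sn (qc f) D w f.

Lemma sn_tr n D w f : qc f <= n -> sn n D w f <-> tr D w f.
Proof. move=> H; apply: (satn_fuel (N := n)) => //. Qed.

Lemma tr_Var D w p : tr D w (Var p) <-> Defs.val p w.
Proof. by rewrite /tr sn_Var. Qed.
Lemma tr_Neg D w g : tr D w (Neg g) <-> ~ tr D w g.
Proof. by rewrite /tr sn_Neg. Qed.
Lemma tr_And D w g h : tr D w (And g h) <-> tr D w g /\ tr D w h.
Proof. rewrite /tr sn_And /= !sn_tr //; lia. Qed.
Lemma tr_K D w a g : tr D w (K a g) <-> forall v, D v -> Defs.rel a w v -> tr D v g.
Proof. by rewrite /tr sn_K. Qed.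
Lemma tr_Ann D w g h : tr D w (Ann g h) <-> (tr D w g -> tr (fun v => D v /\ tr D v g) w h).
Proof.
rewrite /tr sn_Ann /=.
have E : (fun v => D v /\ sn (qc g + qc h) D v g) = (fun v => D v /\ tr D v g).
  apply: functional_extensionality => v; apply: propositional_extensionality.
  rewrite sn_tr //; lia.
rewrite E !sn_tr //; lia.
Qed.
Lemma tr_GAnn D w G c g : tr D w (GAnn G c g) <->
  tr D w c /\ forall psi, isELG G psi -> tr D w (Ann (And psi c) g).
Proof.
rewrite {1}/tr [qc (GAnn _ _ _)]/= sn_GAnn sn_tr; last (rewrite /=; lia).
split => -[H1 H2]; split => // psi Hp; have Hq := isELG_qc Hp.
  apply/(@sn_tr (qc c + qc g)); [rewrite /=; lia| exact: H2].
apply/(@sn_tr (qc c + qc g)); [rewrite /=; lia| exact: H2].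
Qed.
Lemma tr_CoAnn D w G g : tr D w (CoAnn G g) <->
  forall psi, isELG G psi -> exists chi, isELG (~: G) chi /\ tr D w (Imp psi (Dia (And psi chi) g)).
Proof.
rewrite {1}/tr [qc (CoAnn _ _)]/= sn_CoAnn.
split => H psi Hp; have [chi [Hc H2]] := H psi Hp; exists chi; split => //;
  have Hq := isELG_qc Hp; have Hq' := isELG_qc Hc.
  apply/(@sn_tr (qc g)); [rewrite /=; lia| exact: H2].
apply/(@sn_tr (qc g)); [rewrite /=; lia| exact: H2].
Qed.

Variable p0 : P.

Lemma all_iff2 T (E : T -> Prop) (B C : T -> Prop) :
  (forall x, E x -> (B x <-> C x)) -> ((forall x, E x -> B x) <-> (forall x, E x -> C x)).
Proof. move=> H; split => H1 x Ex; [apply/(H x Ex)|apply/(H x Ex)]; by apply: H1. Qed.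

Fixpoint mkc (l : seq form) : form :=
  match l with
  | [::] => Top p0
  | [:: x] => x
  | x :: l' => And x (mkc l')
  end.

Lemma mkc_conj l : conjOf l (mkc l).
Proof.
elim: l => [|x [|y l] IH] /=; first by exists p0.
  by [].
by exists (mkc (y :: l)).
Qed.

Lemma ELG_ex G : exists psi : form, isELG G psi.
Proof.
exists (mkc [seq K i (Top p0) | i <- enum G]).
exists (fun _ => Top p0); split => //. exact: mkc_conj.
Qed.

Lemma tr_Imp D w f g : tr D w (Imp f g) <-> (tr D w f -> tr D w g).
Proof. rewrite /Imp tr_Neg tr_And tr_Neg; tauto. Qed.

Lemma sem_GAnn D w G c g : tr D w (GAnn G c g) <->
  forall psi, isELG G psi -> tr D w (And c (Ann (And psi c) g)).
Proof.
rewrite tr_GAnn; split.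
  by move=> [H1 H2] psi Hp; rewrite tr_And; split => //; apply: H2.
move=> H; have [psi Hp] := ELG_ex G; split.
  by have := H psi Hp; rewrite tr_And => -[].
by move=> psi' Hp'; have := H psi' Hp'; rewrite tr_And => -[].
Qed.

Lemma tr_Ann_comm D w f g h : tr D w (Ann (And f g) h) <-> tr D w (Ann (And g f) h).
Proof.
rewrite !tr_Ann.
have E : (fun v => D v /\ tr D v (And f g)) = (fun v => D v /\ tr D v (And g f)).
  apply: functional_extensionality => v; apply: propositional_extensionality.
  rewrite !tr_And; tauto.
rewrite E !tr_And; tauto.
Qed.

Lemma sem_CoAnn D w G g : tr D w (CoAnn G g) <->
  forall psi, isELG G psi -> tr D w (DiaG (~: G) psi g).
Proof.
rewrite tr_CoAnn; apply: all_iff2 => psi Hp.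
rewrite /DiaG tr_Neg tr_GAnn; split.
  move=> [chi [Hc]]; rewrite tr_Imp /Dia tr_Neg => H [H1 H2].
  by apply: (H H1); apply/tr_Ann_comm; apply: H2.
move=> H; case: (classic (tr D w psi)) => Hpsi.
  apply: NNPP => Hn; apply: H; split => // chi Hc.
  apply/tr_Ann_comm; apply: NNPP => Hn2; apply: Hn; exists chi; split => //.
  by rewrite tr_Imp /Dia tr_Neg.
have [chi Hc] := ELG_ex (~: G); exists chi; split => //.
by rewrite tr_Imp.
Qed.

Lemma sem_Ann_all D w f Z (E : form -> Prop) (X : form -> form) :
  (forall D w, tr D w Z <-> forall psi, E psi -> tr D w (X psi)) ->
  tr D w (Ann f Z) <-> forall psi, E psi -> tr D w (Ann f (X psi)).
Proof.
move=> H; rewrite tr_Ann H; split.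
  by move=> H1 psi Hp; rewrite tr_Ann => Hf; apply: H1.
by move=> H1 Hf psi Hp; have := H1 psi Hp; rewrite tr_Ann; apply.
Qed.

Lemma sem_Ann_false D w f X : ~ tr D w f -> tr D w (Ann f X).
Proof. by move=> H; rewrite tr_Ann. Qed.

Lemma sem_Ann_Ann D w f g h : tr D w (Ann f (Ann g h)) <-> tr D w (Ann (And f (Ann f g)) h).
Proof.
rewrite !tr_Ann tr_And tr_Ann.
set D1 := fun v => D v /\ tr D v f.
have E : (fun v => D1 v /\ tr D1 v g) = (fun v => D v /\ tr D v (And f (Ann f g))).
  apply: functional_extensionality => v; apply: propositional_extensionality.
  rewrite tr_And tr_Ann /D1; tauto.
rewrite E; tauto.
Qed.

Lemma S5 D w f p : tr D w (Ann f (Var p)) <-> (tr D w f -> Defs.val p w).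
Proof. by rewrite tr_Ann tr_Var. Qed.
Lemma S6 D w f g : tr D w (Ann f (Neg g)) <-> (tr D w f -> ~ tr D w (Ann f g)).
Proof. rewrite !tr_Ann tr_Neg; tauto. Qed.
Lemma S7 D w f g h : tr D w (Ann f (And g h)) <-> tr D w (Ann f g) /\ tr D w (Ann f h).
Proof. rewrite !tr_Ann tr_And; tauto. Qed.
Lemma S8 D w f a g : tr D w (Ann f (K a g)) <->
  (tr D w f -> forall v, D v -> Defs.rel a w v -> tr D v (Ann f g)).
Proof.
rewrite tr_Ann tr_K; split.
  by move=> H Hf v Dv R; rewrite tr_Ann => Hfv; apply: H.
by move=> H Hf v [Dv Hfv] R; have := H Hf v Dv R; rewrite tr_Ann; apply.
Qed.

End Sem.

Ltac taut_tac := let v := fresh "v" in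
  move=> v; rewrite /Imp /Iff /=;
  repeat match goal with |- context [peval v ?x] => case: (peval v x) end; by [].

Definition theory (T : form -> Prop) :=
  [/\ (forall f, CoRGAL f -> T f),
      (forall f g, T (Imp f g) -> T f -> T g),
      (forall e G c f, (forall psi, isELG G psi -> T (fill e (And c (Ann (And psi c) f)))) ->
          T (fill e (GAnn G c f))) &
      (forall e G f, (forall psi, isELG G psi -> T (fill e (DiaG (~: G) psi f))) ->
          T (fill e (CoAnn G f)))].

Lemma CoRGAL_theory : theory (@CoRGAL A P).
Proof.
split => //.
- by move=> f g; apply: Ru0.
- by move=> e G c f; apply: Ru5.
- by move=> e G f; apply: Ru6.
Qed.

Section Th.
Variable T : form -> Prop.
Hypothesis HT : theory T.

Lemma th_C f : CoRGAL f -> T f.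
Proof. by case: HT => H _ _ _; apply: H. Qed.
Lemma th_mp f g : T (Imp f g) -> T f -> T g.
Proof. by case: HT => _ H _ _; apply: H. Qed.
Lemma th_taut f : taut f -> T f.
Proof. by move=> H; apply: th_C; apply: Ax0. Qed.
Lemma th_t1 f g : taut (Imp f g) -> T f -> T g.
Proof. by move=> H; apply: th_mp; apply: th_taut. Qed.
Lemma th_t2 f g h : taut (Imp f (Imp g h)) -> T f -> T g -> T h.
Proof. by move=> H Hf; apply: th_mp; apply: th_t1 H Hf. Qed.
Lemma th_t3 f g h k : taut (Imp f (Imp g (Imp h k))) -> T f -> T g -> T h -> T k.
Proof. by move=> H Hf Hg; apply: th_mp; apply: th_t2 H Hf Hg. Qed.
End Th.

Lemma th_K T a : theory T -> theory (fun g => T (K a g)).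
Proof.
move=> HT; split.
- by move=> f Hf; apply: th_C => //; apply: Ru1.
- move=> f g /= H1 H2; exact: (th_mp HT (th_mp HT (th_C HT (Ax1 a f g)) H1) H2).
- move=> e G c f H; case: HT => _ _ H3 _; exact: (H3 (NK a e)).
- move=> e G f H; case: HT => _ _ _ H4; exact: (H4 (NK a e)).
Qed.

Definition mc (T : form -> Prop) :=
  [/\ theory T, (forall f, T f \/ T (Neg f)) & (forall f, T f -> T (Neg f) -> False)].


Section MC.
Variable G : form -> Prop.
Hypothesis HG : mc G.
Lemma mcT : theory G. Proof. by case: HG. Qed.
Lemma mc_neg f : G (Neg f) <-> ~ G f.
Proof. case: HG => _ H1 H2; split; [by move=> Hn Hf; apply: (H2 f)|by case: (H1 f)]. Qed.
Lemma mc_and f g : G (And f g) <-> G f /\ G g.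
Proof.
split.
  move=> H; split; [apply: (th_t1 mcT) H|apply: (th_t1 mcT) H]; taut_tac.
move=> [Hf Hg]; apply: (th_t2 mcT) Hf Hg; taut_tac.
Qed.
Lemma mc_imp f g : G (Imp f g) <-> (G f -> G g).
Proof. rewrite /Imp mc_neg mc_and mc_neg; tauto. Qed.
Lemma mc_iff f g : CoRGAL (Iff f g) -> (G f <-> G g).
Proof. move=> /(th_C mcT); rewrite /Iff mc_and !mc_imp; tauto. Qed.
End MC.

Local Notation T0 := (P + (A + {set A}))%type.
Local Notation tree := (GenTree.tree T0).

Fixpoint encf (f : form) : tree :=
  match f with
  | Var p => GenTree.Leaf (inl p)
  | Neg g => GenTree.Node 0 [:: encf g]
  | And g h => GenTree.Node 1 [:: encf g; encf h]
  | K a g => GenTree.Node 2 [:: GenTree.Leaf (inr (inl a)); encf g]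
  | Ann g h => GenTree.Node 3 [:: encf g; encf h]
  | GAnn G c g => GenTree.Node 4 [:: GenTree.Leaf (inr (inr G)); encf c; encf g]
  | CoAnn G g => GenTree.Node 5 [:: GenTree.Leaf (inr (inr G)); encf g]
  end.

Fixpoint decf (t : tree) : option form :=
  match t with
  | GenTree.Leaf (inl p) => Some (Var p)
  | GenTree.Node 0 [:: t1] => omap (@Neg A P) (decf t1)
  | GenTree.Node 1 [:: t1; t2] =>
      match decf t1, decf t2 with Some g, Some h => Some (And g h) | _, _ => None end
  | GenTree.Node 2 [:: GenTree.Leaf (inr (inl a)); t1] => omap (K a) (decf t1)
  | GenTree.Node 3 [:: t1; t2] =>
      match decf t1, decf t2 with Some g, Some h => Some (Ann g h) | _, _ => None end
  | GenTree.Node 4 [:: GenTree.Leaf (inr (inr G)); t1; t2] =>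
      match decf t1, decf t2 with Some g, Some h => Some (GAnn G g h) | _, _ => None end
  | GenTree.Node 5 [:: GenTree.Leaf (inr (inr G)); t1] => omap (CoAnn G) (decf t1)
  | _ => None
  end.

Lemma encfK f : decf (encf f) = Some f.
Proof. by elim: f => //= [g ->|g -> h ->|a g ->|g -> h ->|G c -> g ->|G g ->]. Qed.

Fixpoint ence (e : nform A P) : tree :=
  match e with
  | NHole => GenTree.Node 0 [::]
  | NImp f e' => GenTree.Node 1 [:: encf f; ence e']
  | NK a e' => GenTree.Node 2 [:: GenTree.Leaf (inr (inl a)); ence e']
  | NAnn f e' => GenTree.Node 3 [:: encf f; ence e']
  end.

Fixpoint dece (t : tree) : option (nform A P) :=
  match t with
  | GenTree.Node 0 [::] => Some NHole
  | GenTree.Node 1 [:: t1; t2] =>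
      match decf t1, dece t2 with Some g, Some h => Some (NImp g h) | _, _ => None end
  | GenTree.Node 2 [:: GenTree.Leaf (inr (inl a)); t1] => omap (NK a) (dece t1)
  | GenTree.Node 3 [:: t1; t2] =>
      match decf t1, dece t2 with Some g, Some h => Some (NAnn g h) | _, _ => None end
  | _ => None
  end.

Lemma enceK e : dece (ence e) = Some e.
Proof. by elim: e => //= [f e' ->|a e' ->|f e' ->]; rewrite ?encfK. Qed.

Definition en (n : nat) : option (form * nform A P) :=
  match @unpickle (tree * tree)%type n with
  | Some (t1, t2) => match decf t1, dece t2 with Some f, Some e => Some (f, e) | _, _ => None end
  | None => None
  end.

Lemma en_surj f e : exists n, en n = Some (f, e).
Proof. exists (pickle (encf f, ence e)); by rewrite /en pickleK encfK enceK. Qed.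


Lemma fill_inj (e : nform A P) x y : fill e x = fill e y -> x = y.
Proof. elim: e => //= [f e IH|a e IH|f e IH] [] //; exact: IH. Qed.

Section Lind.
Variable T : form -> Prop.
Hypothesis HT : theory T.
Variable f0 : form.
Hypothesis Hf0 : ~ T f0.

Definition cons c := ~ T (Neg c).

Definition good c1 f e w := [/\ cons (And c1 w),
  (forall G c g, f = fill e (GAnn G c g) ->
     exists psi, isELG G psi /\ w = Neg (fill e (And c (Ann (And psi c) g)))) &
  (forall G g, f = fill e (CoAnn G g) ->
     exists psi, isELG G psi /\ w = Neg (fill e (DiaG (~: G) psi g)))].

Lemma good_ex cc f e : cons (And cc (Neg f)) -> exists w, good (And cc (Neg f)) f e w.
Proof.
move=> Hc.
set c1 := And cc (Neg f) in Hc *.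
have Hcf : T (Imp c1 f) -> False.
  move=> H; apply: Hc; apply: (th_t1 HT) H; taut_tac.
case: (classic (exists G c g, f = fill e (GAnn G c g))) => [[G [c [g Ef]]]|NG].
  have [psi [Hp Hcons]] : exists psi, isELG G psi /\ cons (And c1 (Neg (fill e (And c (Ann (And psi c) g))))).
    apply: NNPP => Hn; apply: Hcf; rewrite Ef.
    case: HT => _ _ H3 _; apply: (H3 (NImp c1 e)) => psi Hp /=.
    apply: NNPP => Hn2; apply: Hn; by exists psi.
  exists (Neg (fill e (And c (Ann (And psi c) g)))); split => //.
  - move=> G' c' g'; rewrite Ef => /fill_inj [<- <- <-]; by exists psi.
  - by move=> G' g'; rewrite Ef => /fill_inj.
case: (classic (exists G g, f = fill e (CoAnn G g))) => [[G [g Ef]]|NC].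
  have [psi [Hp Hcons]] : exists psi, isELG G psi /\ cons (And c1 (Neg (fill e (DiaG (~: G) psi g)))).
    apply: NNPP => Hn; apply: Hcf; rewrite Ef.
    case: HT => _ _ _ H4; apply: (H4 (NImp c1 e)) => psi Hp /=.
    apply: NNPP => Hn2; apply: Hn; by exists psi.
  exists (Neg (fill e (DiaG (~: G) psi g))); split => //.
  - by move=> G' c' g'; rewrite Ef => /fill_inj.
  - move=> G' g'; rewrite Ef => /fill_inj [<- <-]; by exists psi.
exists c1; split.
- move=> H; apply: Hc; apply: (th_t1 HT) H; taut_tac.
- move=> G c g Ef; exfalso; apply: NG; by exists G, c, g.
- move=> G g Ef; exfalso; apply: NC; by exists G, g.
Qed.

Definition step c (o : option (form * nform A P)) : form :=
  match o with
  | None => c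
  | Some (f, e) =>
      match excluded_middle_informative (cons (And c f)) with
      | left _ => And c f
      | right _ => And (And c (Neg f)) (epsilon (inhabits f) (good (And c (Neg f)) f e))
      end
  end.

Fixpoint cs n := match n with 0 => Neg f0 | n'.+1 => step (cs n') (en n') end.

Lemma step_cons c o : cons c -> cons (step c o).
Proof.
move=> Hc; case: o => [[f e]|] //=.
case: excluded_middle_informative => // Hn.
have Hc1 : cons (And c (Neg f)).
  move=> H1; apply: Hc; apply: (th_t2 HT) H1 _; last first.
    apply: NNPP; exact: Hn.
  taut_tac.
by have [] := epsilon_spec (inhabits f) (good (And c (Neg f)) f e) (good_ex e Hc1).
Qed.

Lemma cs_cons n : cons (cs n).
Proof.
elim: n => [|n IH] /=; last exact: step_cons.
move=> H; apply: Hf0; apply: (th_t1 HT) H; taut_tac.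
Qed.

Lemma step_imp c o : T (Imp (step c o) c).
Proof.
case: o => [[f e]|] /=; first case: excluded_middle_informative => _.
all: apply: th_taut => //; taut_tac.
Qed.

Lemma cs_mono n m : n <= m -> T (Imp (cs m) (cs n)).
Proof.
elim: m => [|m IH] Hnm.
  have -> : n = 0 by lia. apply: th_taut => //; taut_tac.
case: (n =P m.+1) => [->|Hne]; first by apply: th_taut => //; taut_tac.
have H := IH ltac:(lia).
apply: (th_t2 HT) (step_imp (cs m) (en m)) H; taut_tac.
Qed.

Definition Gam g := exists n, T (Imp (cs n) g).

Lemma Gam_up n m g : n <= m -> T (Imp (cs n) g) -> T (Imp (cs m) g).
Proof. move=> H H1; apply: (th_t2 HT) (cs_mono H) H1; taut_tac. Qed.

Lemma Gam_incons n g : T (Imp (cs n) g) -> T (Imp (cs n) (Neg g)) -> False.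
Proof. move=> H1 H2; apply: (@cs_cons n); apply: (th_t2 HT) H1 H2; taut_tac. Qed.

Lemma step_yes c f e : cons (And c f) -> step c (Some (f, e)) = And c f.
Proof. by move=> H /=; case: excluded_middle_informative. Qed.
Lemma step_no c f e : ~ cons (And c f) -> step c (Some (f, e)) =
  And (And c (Neg f)) (epsilon (inhabits f) (good (And c (Neg f)) f e)).
Proof. by move=> H /=; case: excluded_middle_informative. Qed.

Lemma cs_S n f e : en n = Some (f, e) -> cs n.+1 = step (cs n) (Some (f, e)).
Proof. by move=> En /=; rewrite En. Qed.

Lemma Gam_step n f e : en n = Some (f, e) ->
  Gam f \/ [/\ T (Imp (cs n.+1) (Neg f)), T (Imp (cs n.+1) (epsilon (inhabits f) (good (And (cs n) (Neg f)) f e))) &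
     good (And (cs n) (Neg f)) f e (epsilon (inhabits f) (good (And (cs n) (Neg f)) f e))].
Proof.
move=> En; rewrite (cs_S En); case: (classic (cons (And (cs n) f))) => Hc.
  left; exists n.+1; rewrite (cs_S En) step_yes //.
  apply: th_taut => //; taut_tac.
right; rewrite step_no //; split.
  apply: th_taut => //; taut_tac.
  apply: th_taut => //; taut_tac.
have Hc1 : cons (And (cs n) (Neg f)).
  move=> H1; apply: (@cs_cons n); apply: (th_t2 HT) H1 _; last first.
    apply: NNPP; exact: Hc.
  taut_tac.
exact: (epsilon_spec (inhabits f) _ (good_ex e Hc1)).
Qed.

Lemma Gam_mc : mc Gam.
Proof.
have Hmax : forall g, Gam g \/ Gam (Neg g).
  move=> g; have [n En] := en_surj g NHole; case: (Gam_step En) => [|[H _ _]]; first by left.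
  by right; exists n.+1.
split => //.
- split.
  + move=> f Hf; exists 0; apply: (th_t1 HT) (th_C HT Hf); taut_tac.
  + move=> f g [n Hn] [m Hm]; exists (maxn n m).
    apply: (th_t2 HT) (Gam_up (leq_maxl n m) Hn) (Gam_up (leq_maxr n m) Hm); taut_tac.
  + move=> e G c g H; apply: NNPP => Hn.
    have [n En] := en_surj (fill e (GAnn G c g)) e.
    case: (Gam_step En) => [//|[H1 Hw0 [_ H2 _]]].
    have [psi [Hp Ew]] := H2 G c g erefl.
    have [m Hm] := H psi Hp.
    have Hw : T (Imp (cs n.+1) (Neg (fill e (And c (Ann (And psi c) g))))).
      by rewrite -Ew.
    apply: (@Gam_incons (maxn m n.+1) (fill e (And c (Ann (And psi c) g)))).
      exact: Gam_up (leq_maxl _ _) Hm.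
    exact: Gam_up (leq_maxr _ _) Hw.
  + move=> e G g H; apply: NNPP => Hn.
    have [n En] := en_surj (fill e (CoAnn G g)) e.
    case: (Gam_step En) => [//|[H1 Hw0 [_ _ H2]]].
    have [psi [Hp Ew]] := H2 G g erefl.
    have [m Hm] := H psi Hp.
    have Hw : T (Imp (cs n.+1) (Neg (fill e (DiaG (~: G) psi g)))).
      by rewrite -Ew.
    apply: (@Gam_incons (maxn m n.+1) (fill e (DiaG (~: G) psi g))).
      exact: Gam_up (leq_maxl _ _) Hm.
    exact: Gam_up (leq_maxr _ _) Hw.
- move=> f [n Hn] [m Hm]; apply: (@Gam_incons (maxn n m) f).
    exact: Gam_up (leq_maxl _ _) Hn.
  exact: Gam_up (leq_maxr _ _) Hm.
Qed.

Lemma Gam_ext g : T g -> Gam g.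
Proof. move=> H; exists 0; apply: (th_t1 HT) H; taut_tac. Qed.

Lemma Gam_f0 : ~ Gam f0.
Proof.
move=> [n Hn]; apply: (@Gam_incons n f0) => //.
apply: (th_t1 HT) (cs_mono (leq0n n)); taut_tac.
Qed.

End Lind.

Lemma lindenbaum T f : theory T -> ~ T f ->
  exists G, [/\ mc G, (forall g, T g -> G g) & ~ G f].
Proof.
move=> HT Hf; exists (Gam T f); split.
- exact: Gam_mc.
- exact: Gam_ext.
- exact: Gam_f0.
Qed.


Lemma ann_mp G Z X f : mc G -> CoRGAL (Imp Z X) -> G f -> G (Ann f Z) -> G (Ann f X).
Proof.
move=> HG HZX Hf HZ.
have H1 : G (Ann f (Imp Z X)) by apply: (th_C (mcT HG)); apply: Ru2.
move: H1; rewrite /Imp (mc_iff HG (Ax6 _ _)) (mc_imp HG) (mc_neg HG).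
rewrite (mc_iff HG (Ax7 _ _ _)) (mc_and HG) (mc_iff HG (Ax6 _ _)) (mc_imp HG) (mc_neg HG).
move=> H; apply: NNPP => Hn; apply: (H Hf); split => //.
Qed.

Section Canon.
Definition Wc := {G : form -> Prop | mc G}.
Definition Rc (a : A) (G D : Wc) := forall f, sval G (K a f) -> sval D f.

Lemma Rc_refl a G : Rc a G G.
Proof.
move=> f H; have HG := svalP G.
exact: (proj1 (mc_imp HG _ _) (th_C (mcT HG) (Ax2 a f)) H).
Qed.

Lemma Rc_sym a G D : Rc a G D -> Rc a D G.
Proof.
move=> R f Hf; have HG := svalP G; have HD := svalP D.
apply: NNPP => Hn.
have HnK : ~ sval G (K a f).
  move=> HK; apply: Hn; exact: (proj1 (mc_imp HG _ _) (th_C (mcT HG) (Ax2 a f)) HK).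
have H1 : sval G (K a (Neg (K a f))).
  apply: (proj1 (mc_imp HG _ _) (th_C (mcT HG) (Ax4 a f))); exact/(mc_neg HG).
have := R _ H1; rewrite (mc_neg HD); by apply.
Qed.

Lemma Rc_trans a G D E : Rc a G D -> Rc a D E -> Rc a G E.
Proof.
move=> R1 R2 f Hf; have HG := svalP G; apply: R2; apply: R1.
exact: (proj1 (mc_imp HG _ _) (th_C (mcT HG) (Ax3 a f)) Hf).
Qed.

Lemma Rc_ex a (G : Wc) h : ~ sval G (K a h) -> exists D : Wc, Rc a G D /\ ~ sval D h.
Proof.
move=> Hn.
have [D [HD Hext Hh]] := lindenbaum (th_K a (mcT (svalP G))) Hn.
by exists (exist _ D HD); split => // f Hf; apply: Hext.
Qed.

Variable w0 : Wc.
Definition cmod : model := @Model A P Wc w0 Rc Rc_refl Rc_sym Rc_trans (fun p (G : Wc) => sval G (Var p)).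

End Canon.

Fixpoint dd (f : form) : nat :=
  match f with
  | Var _ => 0
  | Neg g => dd g
  | And g h => maxn (dd g) (dd h)
  | K _ g => dd g
  | Ann g h => dd g + dd h
  | GAnn _ c g => (dd c + dd g).+1
  | CoAnn _ g => (dd g).+1
  end.

Fixpoint ss (f : form) : nat :=
  match f with
  | Var _ => 1
  | Neg g => (ss g).+1
  | And g h => ss g + ss h + 1
  | K _ g => (ss g).+1
  | Ann g h => (ss g + 5) * ss h
  | GAnn _ c g => ss g + 2
  | CoAnn _ g => ss g + 5
  end.

Lemma ss_pos f : 0 < ss f.
Proof. elim: f => /= [p|g IH|g IHg h IHh|a g IH|g IHg h IHh|G c IHc g IHg|G g IH]; nia. Qed.

Lemma isEL_dd (f : form) : isEL f -> dd f = 0.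
Proof. elim: f => //= g IHg h IHh [/IHg -> /IHh ->] //. Qed.

Lemma conjOf_dd (l : seq form) f : (forall x, List.In x l -> dd x = 0) -> conjOf l f -> dd f = 0.
Proof.
elim: l f => [|x l IH] f Hl /=.
  by move=> [p ->].
case: l IH Hl => [|y l] IH Hl.
  by move=> ->; apply: Hl; left.
move=> [f' [-> Hc]] /=.
rewrite (Hl x) /=; last by left.
rewrite (IH f') //.
by move=> z Hz; apply: Hl; right.
Qed.

Lemma isELG_dd G (f : form) : isELG G f -> dd f = 0.
Proof.
move=> [phis [Hp Hc]]; apply: conjOf_dd Hc => x /List.in_map_iff [i [<- _]] /=.
exact: isEL_dd.
Qed.

Definition ltf (g f : form) := dd g < dd f \/ (dd g = dd f /\ ss g < ss f).

Lemma lex_ind (Pr : form -> Prop) : (forall f, (forall g, ltf g f -> Pr g) -> Pr f) -> forall f, Pr f.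
Proof.
move=> H.
suff : forall n m f, dd f < n -> ss f < m -> Pr f.
  by move=> S f; apply: (S (dd f).+1 (ss f).+1).
elim => [|n IHn] m f; first by [].
elim: m f => [|m IHm] f Hd Hs; first by [].
apply: H => g [Hg|[Hg1 Hg2]].
  apply: (IHn (ss g).+1) => //; lia.
apply: IHm; lia.
Qed.


Fixpoint somevar (f : form) : P :=
  match f with
  | Var p => p
  | Neg g => somevar g
  | And g _ => somevar g
  | K _ g => somevar g
  | Ann g _ => somevar g
  | GAnn _ c _ => somevar c
  | CoAnn _ g => somevar g
  end.

Section Truth.
Variable p0 : P.
Variable w0 : Wc.
Local Notation M := (cmod w0).
Local Notation TT := (fun _ : world M => True).

Lemma truth f : forall G : world M, tr TT G f <-> sval G f.
Proof.
elim/lex_ind: f => f IH G; have HG := svalP G.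
case: f IH => [p|g|g h|a g|phi g|H c g|H g] IH.
- by rewrite tr_Var.
- rewrite tr_Neg IH ?(mc_neg HG) //; right; rewrite /=; lia.
- rewrite tr_And !IH ?(mc_and HG) //; rewrite /ltf /=; lia.
- rewrite tr_K; split.
    move=> Hall; apply: NNPP => Hn; have [D [R HD]] := Rc_ex Hn.
    by apply: HD; apply/IH; [right; rewrite /=; lia|apply: Hall].
  by move=> HK v _ R; apply/IH; [right; rewrite /=; lia|apply: R].
- have Hphi : forall D : world M, tr TT D phi <-> sval D phi.
    move=> D; apply: IH; have := ss_pos g; rewrite /ltf /=; nia.
  case: g IH => [p|g|g h|a g|psi chi|H c g|H g] IH.
  + rewrite S5 Hphi (mc_iff HG (Ax5 _ _)) (mc_imp HG). by [].
  + rewrite S6 Hphi IH; last by have := ss_pos g; rewrite /ltf /=; nia.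
    by rewrite (mc_iff HG (Ax6 _ _)) (mc_imp HG) (mc_neg HG).
  + rewrite S7 !IH; first last.
      by have := ss_pos g; have := ss_pos h; rewrite /ltf /=; nia.
      by have := ss_pos g; have := ss_pos h; rewrite /ltf /=; nia.
    by rewrite (mc_iff HG (Ax7 _ _ _)) (mc_and HG).
  + rewrite S8 Hphi (mc_iff HG (Ax8 _ _ _)) (mc_imp HG); split.
      move=> H1 Hp; apply: NNPP => Hn; have [D [R HD]] := Rc_ex Hn.
      apply: HD; apply/IH; last exact: H1.
      by have := ss_pos g; rewrite /ltf /=; nia.
    move=> H1 Hp v _ R; apply/IH; last exact: R _ (H1 Hp).
    by have := ss_pos g; rewrite /ltf /=; nia.
  + rewrite sem_Ann_Ann IH; first by rewrite (mc_iff HG (Ax9 _ _ _)).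
    have := ss_pos chi; have := ss_pos psi; have := ss_pos phi; rewrite /ltf /=.
    move=> h1 h2 h3; right; split; first lia.
    nia.
  + rewrite (sem_Ann_all _ _ _ (fun D w => sem_GAnn p0 D w H c g)).
    have IHX : forall psi, isELG H psi -> forall D : world M,
        tr TT D (Ann phi (And c (Ann (And psi c) g))) <-> sval D (Ann phi (And c (Ann (And psi c) g))).
      move=> psi Hp D; apply: IH; left; rewrite /= (isELG_dd Hp); lia.
    split.
      move=> Hall; case: (mcT HG) => _ _ H3 _; apply: (H3 (NAnn phi NHole)) => psi Hp /=.
      by apply/IHX => //; apply: Hall.
    move=> HA psi Hp; apply/IHX => //.
    case: (classic (sval G phi)) => Hf.
      by apply: (ann_mp HG (Ax10 _ _ Hp)) HA.
    by apply/IHX => //; apply: sem_Ann_false; rewrite Hphi.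
  + rewrite (sem_Ann_all _ _ _ (fun D w => sem_CoAnn p0 D w H g)).
    have IHX : forall psi, isELG H psi -> forall D : world M,
        tr TT D (Ann phi (DiaG (~: H) psi g)) <-> sval D (Ann phi (DiaG (~: H) psi g)).
      move=> psi Hp D; apply: IH; rewrite /ltf /= (isELG_dd Hp); right; split; first lia.
      have := ss_pos phi; nia.
    split.
      move=> Hall; case: (mcT HG) => _ _ _ H4; apply: (H4 (NAnn phi NHole)) => psi Hp /=.
      by apply/IHX => //; apply: Hall.
    move=> HA psi Hp; apply/IHX => //.
    case: (classic (sval G phi)) => Hf.
      by apply: (ann_mp HG (Ax11 _ Hp)) HA.
    by apply/IHX => //; apply: sem_Ann_false; rewrite Hphi.
- rewrite (sem_GAnn p0).
  have IHX : forall psi, isELG H psi -> forall D : world M,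
      tr TT D (And c (Ann (And psi c) g)) <-> sval D (And c (Ann (And psi c) g)).
    move=> psi Hp D; apply: IH; left; rewrite /= (isELG_dd Hp); lia.
  split.
    move=> Hall; case: (mcT HG) => _ _ H3 _; apply: (H3 NHole) => psi Hp /=.
    by apply/IHX => //; apply: Hall.
  move=> HA psi Hp; apply/IHX => //.
  exact: (proj1 (mc_imp HG _ _) (th_C (mcT HG) (Ax10 _ _ Hp)) HA).
- rewrite (sem_CoAnn p0).
  have IHX : forall psi, isELG H psi -> forall D : world M,
      tr TT D (DiaG (~: H) psi g) <-> sval D (DiaG (~: H) psi g).
    move=> psi Hp D; apply: IH; rewrite /ltf /= (isELG_dd Hp); right; split; lia.
  split.
    move=> Hall; case: (mcT HG) => _ _ _ H4; apply: (H4 NHole) => psi Hp /=.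
    by apply/IHX => //; apply: Hall.
  move=> HA psi Hp; apply/IHX => //.
  exact: (proj1 (mc_imp HG _ _) (th_C (mcT HG) (Ax11 _ Hp)) HA).
Qed.

End Truth.
End Proof.

Theorem mainTheorem15 (A : finType) (P : countType) (phi : form A P) :
  valid phi -> CoRGAL phi.
Proof.
move=> Hv; apply: NNPP => Hn.
have [G [HG _ HGphi]] := lindenbaum (CoRGAL_theory A P) Hn.
pose w0 : Wc A P := exist _ G HG.
have H := Hv (cmod w0) w0.
apply: HGphi; exact: (proj1 (truth (somevar phi) phi w0) H).
Qed.
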